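(* Let $n \geq 1$ and let $A=(a_{\{i,j\}})$ and $B=(b_{\{i,j\}})$ be real symmetric $n\times n$ matrices, regarded as having $2n+2\binom{n}{2}$ independent commuting indeterminates $a_{\{i,j\}}, b_{\{i,j\}}$ ($\{i,j\}\subseteq[n]$, $1\le |\{i,j\}|\le 2$) as entries. Define: - $z_1$: the vector indexed by the subsets $S\subseteq [n]$ with $|S|\in\{1,2\}$ whose $S$-entry is $a_S b_S$ (so the $\{i\}$-entry is $a_{\{i,i\}}b_{\{i,i\}}$); - $Q_1$: the $(n+\binom n2)\times(n+\binom n2)$ matrix indexed by the same subsets, with $(S,S')$-entry $6\,|S\cap S'|$; - for $1\le i<j\le n$, $z_{2,(i,j)}\in\mathbb{R}[a,b]^{2n}$: the vector whose $k$-th entry is $a_{\{i,k\}}b_{\{j,k\}}$ and whose $(n+k)$-th entry is $a_{\{j,k\}}b_{\{i,k\}}$, for $k=1,\dots,n$; - $Q_2$: the $2n\times 2n$ block matrix $\begin{pmatrix}4J_n & 2J_n\\ 2J_n & 4J_n\end{pmatrix}$, where $J_n$ is the $n\times n$ all-ones matrix. Then $Q_1$ and $Q_2$ are positive semidefinite, and the coefficient of $t^2$ in $\operatorname{trace}((A+tB)^4)$ equals, as a polynomial identity, $$z_1^TQ_1z_1+\sum_{1\le i<j\le n} z_{2,(i,j)}^TQ_2\,z_{2,(i,j)}.$$ In particular this coefficient is a sum of squares of polynomials in the entries of $A$ and $B$, and hence is non-negative for all real symmetric $n\times n$ matrices $A,B$.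
   Context: $[n]=\{1,\dots,n\}$. The entry of a symmetric matrix in positions $(i,j)$ and $(j,i)$ is denoted by a single symbol indexed by the unordered set $\{i,j\}$; e.g. $a_{\{i,i\}}$ is the $(i,i)$ diagonal entry of $A$. The coefficient of $t^r$ in $\operatorname{trace}((A+tB)^m)$ is taken with $t$ a scalar indeterminate. *)

(* Defs.v *)
From HB Require Import structures.
From mathcomp Require Import all_boot all_order all_algebra.
Set Implicit Arguments. Unset Strict Implicit. Unset Printing Implicit Defensive.
Import Order.TTheory GRing.Theory Num.Theory.
Local Open Scope ring_scope.

(* Index type for the subsets S of [n] with |S| in {1,2}:
   the pair (i,j) with i <= j encodes S = {i,j}. *)
Definition subidx (n : nat) := {p : 'I_n * 'I_n | (p.1 <= p.2)%N}.

Definition subset_of (n : nat) (p : subidx n) : {set 'I_n} :=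
  [set (val p).1; (val p).2].

Definition qform (R : pzRingType) (I : finType) (Q : I -> I -> R) (z : I -> R) : R :=
  \sum_(i : I) \sum_(j : I) z i * Q i j * z j.

Definition psd (R : numDomainType) (I : finType) (Q : I -> I -> R) : Prop :=
  (forall i j, Q i j = Q j i) /\ (forall z : I -> R, 0 <= qform Q z).

Definition z1 (R : pzRingType) (n : nat) (A B : 'M[R]_n) (p : subidx n) : R :=
  A (val p).1 (val p).2 * B (val p).1 (val p).2.

Definition Q1 (R : pzRingType) (n : nat) (p q : subidx n) : R :=
  (6 * #|subset_of p :&: subset_of q|)%:R.

Definition Jn (R : pzRingType) (n : nat) : 'M[R]_n := const_mx 1.
Definition Q2 (R : pzRingType) (n : nat) : 'M[R]_(n + n) :=
  block_mx (4 *: Jn R n) (2 *: Jn R n) (2 *: Jn R n) (4 *: Jn R n).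

Definition z2 (R : pzRingType) (n : nat) (A B : 'M[R]_n) (i j : 'I_n) : 'cV[R]_(n + n) :=
  col_mx (\col_k (A i k * B j k)) (\col_k (A j k * B i k)).

Definition coef_t2 (R : comNzRingType) (n : nat) (A B : 'M[R]_n) : R :=
  (\tr ((map_mx polyC A + 'X *: map_mx polyC B) ^+ 4))`_2.

(* Main.v *)
Require Import Defs.
From HB Require Import structures.
From mathcomp Require Import all_boot all_order all_algebra.
From mathcomp Require Import ring lra zify.
Import Order.TTheory GRing.Theory Num.Theory.
Local Open Scope ring_scope.

Lemma expand4 (S : pzRingType) (T : pzRingType) (s : S -> T -> T)
  (sAl : forall k x y, s k (x * y) = s k x * y)
  (sAr : forall k x y, s k (x * y) = x * s k y)
  (sA : forall a b x, s a (s b x) = s (a * b) x)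
  (sD : forall k x y, s k (x + y) = s k x + s k y)
  (x : S) (P Q : T) : (P + s x Q) ^+ 4 =
  P * P * P * P + s x (P * P * P * Q) + s x (P * P * Q * P) +
  s (x * x) (P * P * Q * Q) + s x (P * Q * P * P) + 
  s (x * x) (P * Q * P * Q) + s (x * x) (P * Q * Q * P) +
  s (x * x * x) (P * Q * Q * Q) + s x (Q * P * P * P) +
  s (x * x) (Q * P * P * Q) + s (x * x) (Q * P * Q * P) +
  s (x * x * x) (Q * P * Q * Q) + s (x * x) (Q * Q * P * P) +
  s (x * x * x) (Q * Q * P * Q) + s (x * x * x) (Q * Q * Q * P) +
  s (x * x * x * x) (Q * Q * Q * Q).
Proof.
rewrite !exprS expr0 mulr1 !mulrDl !mulrDr !mulrA.
by rewrite -!(sAl, sAr) !sA ?mulrA !addrA.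
Qed.

Section S.
Variable R : comNzRingType.
Variable n : nat.
Implicit Types A B : 'M[R]_n.

Lemma tr_map_polyC (W : 'M[R]_n) : \tr (map_mx polyC W) = (\tr W)%:P.
Proof. by rewrite /mxtrace rmorph_sum; apply: eq_bigr => i _; rewrite mxE. Qed.

Lemma trrot (a b c d : 'M[R]_n) : \tr (a *m b *m c *m d) = \tr (b *m c *m d *m a).
Proof. by rewrite -!mulmxA mxtrace_mulC !mulmxA. Qed.

Lemma coefXXC (p : {poly R}) : ('X * 'X * p)`_2 = p`_0.
Proof. by rewrite -mulrA !coefXM. Qed.

Lemma coef_t2E A B : coef_t2 A B = 4 * \tr (B *m A *m A *m B) + 2 * \tr (A *m B *m A *m B).
Proof.
rewrite /coef_t2 (@expand4 _ _ (fun k (M : 'M[{poly R}]_n) => k *: M)); first last.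
- by move=> *; rewrite scalerDr.
- by move=> *; rewrite scalerA.
- by move=> *; rewrite -!mulmxE scalemxAr.
- by move=> *; rewrite -!mulmxE scalemxAl.
rewrite !mxtraceD !mxtraceZ -!mulmxE -!map_mxM !tr_map_polyC.
rewrite !coefD -!mulrA !coefXM !coefC /=.
rewrite (trrot B B A A) (trrot B A A B) (trrot A B B A) (trrot B A B A).
rewrite (trrot A A B B) (trrot A B B A) (trrot B B A A).
rewrite !add0r !addr0; ring.
Qed.

Lemma split_le (g : 'I_n -> 'I_n -> R) :
  \sum_(i < n) \sum_(j < n | (i <= j)%N) g i j = \sum_(i < n) g i i + \sum_(i < n) \sum_(j < n | (i < j)%N) g i j.
Proof.
rewrite -big_split /=; apply: eq_bigr => i _.
rewrite (bigD1 i) //=; congr (_ + _); apply: eq_bigl => j.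
by rewrite ltn_neqAle andbC eq_sym.
Qed.

Lemma split_all (G : 'I_n -> 'I_n -> R) :
  \sum_(i < n) \sum_(j < n) G i j = \sum_(i < n) G i i + \sum_(i < n) \sum_(j < n | (i < j)%N) (G i j + G j i).
Proof.
have E : forall i : 'I_n, \sum_(j < n) G i j = G i i + \sum_(j < n | (i < j)%N) G i j + \sum_(j < n | (j < i)%N) G i j.
  move=> i; rewrite (bigD1 i) //= -addrA; congr (_ + _).
  rewrite (bigID (fun j : 'I_n => (i < j)%N)) /=; congr (_ + _); apply: eq_bigl => j.
    by rewrite -(inj_eq val_inj) /=; apply/idP/idP; lia.
  by rewrite -(inj_eq val_inj) /=; apply/idP/idP; lia.
rewrite (eq_bigr _ (fun i _ => E i)) !big_split /= -addrA; congr (_ + _).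
rewrite [X in _ = X](eq_bigr _ (fun i _ => big_split _ _ _ _ _)) big_split /=; congr (_ + _).
rewrite (eq_bigr _ (fun i _ => big_mkcond _ _)) exchange_big /=.
by apply: eq_bigr => i _; rewrite [RHS]big_mkcond.
Qed.


Lemma sumsq (u v : 'I_n -> R) : (\sum_(k < n) u k) * (\sum_(l < n) v l) = \sum_(k < n) \sum_(l < n) u k * v l.
Proof. by rewrite big_distrl; apply: eq_bigr => k _; rewrite big_distrr. Qed.

Lemma spl (F : 'I_(n + n) -> R) : \sum_(i < n + n) F i = \sum_(i < n) F (lshift n i) + \sum_(i < n) F (rshift n i).
Proof. exact: big_split_ord. Qed.

Lemma qform_Q2 (z : 'I_(n + n) -> R) :
  qform (fun k l => @Q2 R n k l) z =
  4 * ((\sum_(k < n) z (lshift n k)) * (\sum_(k < n) z (lshift n k))) +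
  4 * ((\sum_(k < n) z (lshift n k)) * (\sum_(k < n) z (rshift n k)))
  + 4 * ((\sum_(k < n) z (rshift n k)) * (\sum_(k < n) z (rshift n k))).
Proof.
have Qll i j : @Q2 R n (lshift n i) (lshift n j) = 4 by rewrite /Q2 block_mxEul !mxE mulr1.
have Qlr i j : @Q2 R n (lshift n i) (rshift n j) = 2 by rewrite /Q2 block_mxEur !mxE mulr1.
have Qrl i j : @Q2 R n (rshift n i) (lshift n j) = 2 by rewrite /Q2 block_mxEdl !mxE mulr1.
have Qrr i j : @Q2 R n (rshift n i) (rshift n j) = 4 by rewrite /Q2 block_mxEdr !mxE mulr1.
rewrite /qform spl.
under eq_bigr => i _ do rewrite spl.
under [X in _ + X]eq_bigr => i _ do rewrite spl.
under eq_bigr => i _ do (under eq_bigr => j _ do rewrite Qll; under [X in _ + X]eq_bigr => j _ do rewrite Qlr).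
under [X in _ + X]eq_bigr => i _ do (under eq_bigr => j _ do rewrite Qrl; under [X in _ + X]eq_bigr => j _ do rewrite Qrr).
rewrite !sumsq -!big_split /= !big_split /=.
rewrite [X in _ + (X + _) = _]exchange_big /= -!big_split /=.
rewrite !mulr_sumr -!big_split /=; apply: eq_bigr => i _; rewrite -!big_split /=.
rewrite !mulr_sumr -!big_split /=.
by apply: eq_bigr => j _; ring.
Qed.

Lemma sum_subidx (F : 'I_n * 'I_n -> R) :
  \sum_(p : subidx n) F (val p) = \sum_(i < n) \sum_(j < n | (i <= j)%N) F (i, j).
Proof.
rewrite pair_big_dep /=.
rewrite [RHS](reindex_omap (val : subidx n -> _) insub) /=; last first.
  by move=> x Px; rewrite insubT.
apply: eq_big => [p|p _]; last by case: (val p).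
by rewrite (valP p) valK eqxx.
Qed.

Lemma sumsqF (I : finType) (u v : I -> R) : (\sum_(k : I) u k) * (\sum_(l : I) v l) = \sum_(k : I) \sum_(l : I) u k * v l.
Proof. by rewrite big_distrl; apply: eq_bigr => k _; rewrite big_distrr. Qed.

Lemma qform_Q1 (z : subidx n -> R) : qform (@Q1 R n) z =
  6 * \sum_(k < n) ((\sum_(p : subidx n) (k \in subset_of p)%:R * z p) * (\sum_(p : subidx n) (k \in subset_of p)%:R * z p)).
Proof.
have E p q : ((6 * #|subset_of p :&: subset_of q|)%N%:R : R) =
   6 * \sum_(k < n) ((k \in subset_of p)%:R * (k \in subset_of q)%:R).
  rewrite natrM -sum1_card natr_sum big_mkcond /=; congr (_ * _); apply: eq_bigr => k _.
  by rewrite in_setI; case: (k \in subset_of p); case: (k \in subset_of q); rewrite /= ?mulr1 ?mulr0.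
rewrite /qform /Q1.
under eq_bigr => p _ do under eq_bigr => q _ do rewrite E !mulr_sumr mulr_suml.
under eq_bigr => p _ do rewrite exchange_big.
rewrite exchange_big mulr_sumr; apply: eq_bigr => k _.
rewrite sumsqF mulr_sumr; apply: eq_bigr => p _; rewrite mulr_sumr; apply: eq_bigr => q _.
ring.
Qed.

Lemma diag_sum (A B : 'M[R]_n) (sA : forall i j, A i j = A j i) (sB : forall i j, B i j = B j i) k :
  \sum_(p : subidx n) (k \in subset_of p)%:R * z1 A B p = (A *m B) k k.
Proof.
rewrite /z1 (sum_subidx (fun x => (k \in [set x.1; x.2])%:R * (A x.1 x.2 * B x.1 x.2))) /=.
rewrite mxE.
have -> : \sum_(j < n) A k j * B j k = \sum_(i < n) \sum_(j < n) ((i == k)%:R * (A i j * B i j)).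
  rewrite [RHS](bigD1 k) //= [X in _ = _ + X]big1 ?addr0; last first.
    by move=> i /negbTE ->; apply: big1 => j _; rewrite mul0r.
  by rewrite eqxx; apply: eq_bigr => j _; rewrite mul1r (sB j k).
rewrite split_all split_le; congr (_ + _).
  by apply: eq_bigr => i _; rewrite in_set2 orbb eq_sym.
apply: eq_bigr => i _; apply: eq_bigr => j lij.
rewrite in_set2 (sA j i) (sB j i).
case: (eqVneq j i) => [eji|nji]; first by rewrite eji ltnn in lij.
rewrite (eq_sym k i) (eq_sym k j).
case: (eqVneq i k) => [eik|nik]; case: (eqVneq j k) => [ejk|njk] /=.
- by move: nji; rewrite eik ejk eqxx.
- by rewrite mul0r addr0.
- by rewrite mul0r add0r.
- by rewrite mul0r addr0.
Qed.

Lemma identity (A B : 'M[R]_n) (hA : A^T = A) (hB : B^T = B) :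
  coef_t2 A B =
       qform (@Q1 R n) (z1 A B) +
       \sum_(i < n) \sum_(j < n | (i < j)%N)
          qform (fun k l => @Q2 R n k l) (fun k => z2 A B i j k 0).
Proof.
have sA i j : A i j = A j i by rewrite -{1}hA mxE.
have sB i j : B i j = B j i by rewrite -{1}hB mxE.
set C := A *m B.
have t1 : \tr (B *m A *m A *m B) = \sum_(i < n) \sum_(j < n) C j i * C j i.
  rewrite /mxtrace; apply: eq_bigr => i _; rewrite -mulmxA mxE; apply: eq_bigr => j _.
  congr (_ * _); rewrite !mxE; apply: eq_bigr => k _; by rewrite sA sB mulrC.
have t2 : \tr (A *m B *m A *m B) = \sum_(i < n) \sum_(j < n) C i j * C j i.
  by rewrite /mxtrace; apply: eq_bigr => i _; rewrite -mulmxA mxE.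
have Z i j : qform (fun k l => @Q2 R n k l) (fun k => z2 A B i j k 0) =
    4 * (C i j * C i j) + 4 * (C i j * C j i) + 4 * (C j i * C j i).
  have e1 : \sum_(k < n) z2 A B i j (lshift n k) 0 = C i j.
    by rewrite /C mxE; apply: eq_bigr => k _; rewrite col_mxEu mxE (sB k j).
  have e2 : \sum_(k < n) z2 A B i j (rshift n k) 0 = C j i.
    by rewrite /C mxE; apply: eq_bigr => k _; rewrite col_mxEd mxE (sB k i).
  by rewrite qform_Q2 e1 e2.
rewrite coef_t2E t1 t2 [X in 4 * X]exchange_big /= !mulr_sumr -big_split /=.
under eq_bigr => i _ do rewrite !mulr_sumr -big_split /=.
rewrite split_all /= qform_Q1.
have D k : \sum_(p : subidx n) (k \in subset_of p)%:R * z1 A B p = C k k := diag_sum A B sA sB k.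
rewrite [X in _ = 6 * X + _](_ : _ = \sum_(k < n) C k k * C k k); last by apply: eq_bigr => k _; congr (_ * _); exact: D.
under [in RHS]eq_bigr => i _ do under eq_bigr => j _ do rewrite Z.
congr (_ + _).
  by rewrite mulr_sumr; apply: eq_bigr => i _; ring.
by apply: eq_bigr => i _; apply: eq_bigr => j _; ring.
Qed.

End S.

Lemma psd_Q1 (R : realFieldType) (n : nat) : psd (@Q1 R n).
Proof.
split; first by move=> p q; rewrite /Q1 setIC.
move=> z; rewrite qform_Q1; apply: mulr_ge0 => //; apply: sumr_ge0 => k _.
by rewrite -expr2 sqr_ge0.
Qed.

Lemma psd_Q2 (R : realFieldType) (n : nat) : psd (fun k l => @Q2 R n k l).
Proof.
split.
  have T : (Q2 R n)^T = Q2 R n by rewrite /Q2 tr_block_mx /Jn !linearZ /= trmx_const.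
  by move=> k l; rewrite -{1}T mxE.
move=> z; rewrite qform_Q2.
set a := \sum_(k < n) _; set b := \sum_(k < n) _.
nra.
Qed.

Theorem theorem2 (n : nat) (hn : (0 < n)%N) :
  (forall R : realFieldType, psd (@Q1 R n) /\ psd (fun k l => @Q2 R n k l)) /\
  (forall (R : comNzRingType) (A B : 'M[R]_n), A^T = A -> B^T = B ->
     coef_t2 A B =
       qform (@Q1 R n) (z1 A B) +
       \sum_(i < n) \sum_(j < n | (i < j)%N)
          qform (fun k l => @Q2 R n k l) (fun k => z2 A B i j k 0)) /\
  (forall (R : realFieldType) (A B : 'M[R]_n), A^T = A -> B^T = B ->
     0 <= coef_t2 A B).
Proof.
split; first by move=> R; split; [exact: psd_Q1 | exact: psd_Q2].
split; first by move=> R A B hA hB; exact: identity.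
move=> R A B hA hB; rewrite identity //; apply: addr_ge0; first exact: (psd_Q1 R n).2.
apply: sumr_ge0 => i _; apply: sumr_ge0 => j _; exact: (psd_Q2 R n).2.
Qed.
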